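(* For every ensemble $\mathcal{E}=\{\eta_{i},\rho_{i}\}_{i\in\mathbb{N}_{n}}$, $p_{\sf G}(\mathcal{E})\ge \lambda/n$, where $\lambda$ is the smallest nonzero eigenvalue of $\rho_0=\sum_{i}\eta_i\rho_i$.
   Context: $\mathbb{N}_{n}=\{1,\ldots,n\}$. $\mathcal{H}$ is a finite-dimensional complex Hilbert space, $\mathbb{H}_{+}$ the positive-semidefinite operators on it, $\mathbbm{1}$ the identity. An ensemble $\mathcal{E}=\{\eta_{i},\rho_{i}\}_{i\in\mathbb{N}_{n}}$: density operators $\rho_i$ with probabilities $\eta_i>0$, $\sum_i\eta_i=1$. A measurement is $\{M_{?}\}\cup\{M_{i}\}_{i\in\mathbb{N}_{n}}\subseteq\mathbb{H}_+$ with $M_?+\sum_iM_i=\mathbbm{1}$. $\mathcal{C}_{x}(\mathcal{E})$ is the maximum of $\eta_{x}\Tr(\rho_{x}M_{x})/\Tr(\rho_{0}M_{x})$ over measurements with $\Tr(\rho_{0}M_{x})>0$. $\mathbb{M}_{i}(\mathcal{E})=\{E\in\mathbb{H}_{+}\mid\Tr[(\mathcal{C}_{i}(\mathcal{E})\rho_{0}-\eta_{i}\rho_{i})E]=0\}$; $\mathbb{M}(\mathcal{E})$ is the set of measurements with $M_i\in\mathbb{M}_i(\mathcal{E})$ for all $i$ (maximum-confidence measurements). $p_{\sf G}(\mathcal{E})=\max_{\mathcal{M}\in\mathbb{M}(\mathcal{E})}\sum_{i}\eta_{i}\Tr(\rho_{i}M_{i})$. *)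

(* Defs.v *)
From HB Require Import structures.
From mathcomp Require Import all_boot all_order all_algebra.
From mathcomp Require Import complex.
From mathcomp Require Import classical_sets reals.

Set Implicit Arguments.
Unset Strict Implicit.
Unset Printing Implicit Defensive.

Import Order.TTheory GRing.Theory Num.Theory.
Local Open Scope ring_scope.
Local Open Scope complex_scope.
Local Open Scope classical_set_scope.

Section QState.
Variable R : realType.
Local Notation C := R[i].

Definition adjmx (m k : nat) (A : 'M[C]_(m, k)) : 'M[C]_(k, m) := map_mx Num.conj (A^T).

Definition psd (d : nat) (A : 'M[C]_d) : Prop :=
  adjmx A = A /\ forall v : 'rV[C]_d, 0 <= (v *m A *m adjmx v) 0 0.

Definition density (d : nat) (rho : 'M[C]_d) : Prop :=
  psd rho /\ \tr rho = 1.

(* ensemble {eta_i, rho_i}_{i in N_n} (indices 'I_n stand for 1..n) *)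
Definition ensemble (d n : nat) (eta : 'I_n -> R) (rho : 'I_n -> 'M[C]_d) : Prop :=
  (forall i, 0 < eta i) /\ (\sum_i eta i = 1) /\ (forall i, density (rho i)).

Definition rho0 (d n : nat) (eta : 'I_n -> R) (rho : 'I_n -> 'M[C]_d) : 'M[C]_d :=
  \sum_i (eta i)%:C *: rho i.

(* measurement {M_?} u {M_i}: PSD elements summing to the identity *)
Definition measurement (d n : nat) (Mq : 'M[C]_d) (M : 'I_n -> 'M[C]_d) : Prop :=
  psd Mq /\ (forall i, psd (M i)) /\ Mq + \sum_i M i = 1%:M.

(* Tr(A B) as a real number (it is real for PSD A, B) *)
Definition trR (d : nat) (A B : 'M[C]_d) : R := complex.Re (\tr (A *m B)).

(* C_x(E): the maximum (= supremum, attained) of eta_x Tr(rho_x M_x)/Tr(rho_0 M_x)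
   over measurements with Tr(rho_0 M_x) > 0 *)
Definition conf (d n : nat) (eta : 'I_n -> R) (rho : 'I_n -> 'M[C]_d) (x : 'I_n) : R :=
  sup [set r : R | exists (Mq : 'M[C]_d) (M : 'I_n -> 'M[C]_d),
         [/\ measurement Mq M, 0 < trR (rho0 eta rho) (M x) &
             r = eta x * trR (rho x) (M x) / trR (rho0 eta rho) (M x)]].

Definition Mset (d n : nat) (eta : 'I_n -> R) (rho : 'I_n -> 'M[C]_d) (i : 'I_n)
  (E : 'M[C]_d) : Prop :=
  psd E /\
  \tr (((conf eta rho i)%:C *: rho0 eta rho - (eta i)%:C *: rho i) *m E) = 0.

Definition maxconf_meas (d n : nat) (eta : 'I_n -> R) (rho : 'I_n -> 'M[C]_d)
  (Mq : 'M[C]_d) (M : 'I_n -> 'M[C]_d) : Prop :=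
  measurement Mq M /\ forall i, Mset eta rho i (M i).

Definition pG (d n : nat) (eta : 'I_n -> R) (rho : 'I_n -> 'M[C]_d) : R :=
  sup [set p : R | exists (Mq : 'M[C]_d) (M : 'I_n -> 'M[C]_d),
         maxconf_meas eta rho Mq M /\ p = \sum_i eta i * trR (rho i) (M i)].

Definition smallest_nonzero_eigenvalue (d : nat) (A : 'M[C]_d) (lam : R) : Prop :=
  [/\ eigenvalue A lam%:C, lam != 0 &
      forall mu : C, eigenvalue A mu -> mu != 0 -> lam%:C <= mu].

End QState.

(* Main.v *)
Require Import Defs.
From HB Require Import structures.
From mathcomp Require Import all_boot all_order all_algebra.
From mathcomp Require Import complex.
From mathcomp Require Import classical_sets reals.
From mathcomp Require Import ring.
Set Implicit Arguments.
Unset Strict Implicit.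
Unset Printing Implicit Defensive.
Import Order.TTheory GRing.Theory Num.Theory Num.Def.
Local Open Scope ring_scope.
Local Open Scope complex_scope.

Section Helpers.
Variable R : realType.
Local Notation C := R[i].
Local Notation adj := (@adjmx R _ _).

Lemma adjE m k (A : 'M[C]_(m, k)) : adjmx A = map_mx conjC A^T.
Proof. by []. Qed.

Lemma adjK m k (A : 'M[C]_(m, k)) : adjmx (adjmx A) = A.
Proof. by apply/matrixP=> i j; rewrite !mxE conjCK. Qed.

Lemma adjM m k l (A : 'M[C]_(m, k)) (B : 'M[C]_(k, l)) :
  adjmx (A *m B) = adjmx B *m adjmx A.
Proof. by rewrite !adjE trmx_mul map_mxM. Qed.

Lemma adjD m k (A B : 'M[C]_(m, k)) : adjmx (A + B) = adjmx A + adjmx B.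
Proof. by rewrite !adjE linearD /= map_mxD. Qed.

Lemma adjN m k (A : 'M[C]_(m, k)) : adjmx (- A) = - adjmx A.
Proof. by rewrite !adjE linearN /= map_mxN. Qed.

Lemma adjB m k (A B : 'M[C]_(m, k)) : adjmx (A - B) = adjmx A - adjmx B.
Proof. by rewrite adjD adjN. Qed.

Lemma adjZ m k (a : C) (A : 'M[C]_(m, k)) : adjmx (a *: A) = conjC a *: adjmx A.
Proof. by apply/matrixP=> i j; rewrite !mxE rmorphM. Qed.

Lemma conjCr (a : R) : conjC (a%:C : C) = a%:C.
Proof. exact: conjc_real. Qed.

Lemma adjZr m k (a : R) (A : 'M[C]_(m, k)) : adjmx (a%:C *: A) = a%:C *: adjmx A.
Proof. by rewrite adjZ conjCr. Qed.

Lemma adj1 n : adjmx (1%:M : 'M[C]_n) = 1%:M.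
Proof. by apply/matrixP=> i j; rewrite !mxE conjC_nat eq_sym. Qed.

Lemma adj0 m k : adjmx (0 : 'M[C]_(m, k)) = 0.
Proof. by apply/matrixP=> i j; rewrite !mxE conjC0. Qed.

Lemma adj_sum (I : finType) m k (F : I -> 'M[C]_(m, k)) :
  adjmx (\sum_i F i) = \sum_i adjmx (F i).
Proof.
apply/matrixP=> i j; rewrite !mxE summxE rmorph_sum /=.
by rewrite summxE; apply: eq_bigr => l _; rewrite !mxE.
Qed.

Lemma adj_diag n (r : 'rV[C]_n) : (forall j, 0 <= r 0 j) -> adjmx (diag_mx r) = diag_mx r.
Proof.
move=> hr; apply/matrixP=> i j; rewrite !mxE.
have [->|ne] := eqVneq i j; first by rewrite !mulr1n geC0_conj.
by rewrite !mulr0n conjC0.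
Qed.

Lemma psd_form d (A : 'M[C]_d) (v : 'rV[C]_d) : psd A -> 0 <= (v *m A *m adjmx v) 0 0.
Proof. by case=> _ ->. Qed.

Lemma psd_herm d (A : 'M[C]_d) : psd A -> adjmx A = A.
Proof. by case. Qed.

Lemma psd_conj d m (A : 'M[C]_d) (K : 'M[C]_(d, m)) : psd A -> psd (adjmx K *m A *m K).
Proof.
move=> [hA pA]; split; first by rewrite !adjM adjK hA mulmxA.
move=> v; have := pA (v *m adjmx K).
by rewrite adjM adjK !mulmxA.
Qed.

Lemma psdD d (A B : 'M[C]_d) : psd A -> psd B -> psd (A + B).
Proof.
move=> [hA pA] [hB pB]; split; first by rewrite adjD hA hB.
by move=> v; rewrite mulmxDr mulmxDl mxE addr_ge0.
Qed.

Lemma psd0 d : psd (0 : 'M[C]_d).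
Proof. by split; [rewrite adj0|move=> v; rewrite mulmx0 mul0mx mxE]. Qed.

Lemma psd_sum (I : finType) (P : pred I) d (F : I -> 'M[C]_d) :
  (forall i, P i -> psd (F i)) -> psd (\sum_(i | P i) F i).
Proof.
move=> H; elim/big_rec: _ => [|i x Pi Hx]; first exact: psd0.
exact: psdD (H _ Pi) Hx.
Qed.

Lemma psdZ d (a : R) (A : 'M[C]_d) : 0 <= a -> psd A -> psd (a%:C *: A).
Proof.
move=> ha [hA pA]; split; first by rewrite adjZr hA.
move=> v; rewrite -scalemxAr -scalemxAl mxE mulr_ge0 //.
by rewrite ler0c.
Qed.

Lemma psd_rank1 d (v : 'rV[C]_d) : psd (adjmx v *m v).
Proof.
split; first by rewrite adjM adjK.
move=> u; have -> : u *m (adjmx v *m v) *m adjmx u = (u *m adjmx v) *m adjmx (u *m adjmx v).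
  by rewrite adjM adjK !mulmxA.
set z := u *m adjmx v.
have -> : (z *m adjmx z) 0 0 = z 0 0 * conjC (z 0 0).
  by rewrite mxE big_ord1 !mxE.
exact: mul_conjC_ge0.
Qed.

Lemma dot_ge0 d (u : 'rV[C]_d) : 0 <= (u *m adjmx u) 0 0.
Proof.
rewrite mxE sumr_ge0 // => j _; rewrite !mxE; exact: mul_conjC_ge0.
Qed.

Lemma psd_diag d (r : 'rV[C]_d) : (forall j, 0 <= r 0 j) -> psd (diag_mx r).
Proof.
move=> hr; split; first exact: adj_diag.
move=> v; rewrite mul_mx_diag mxE sumr_ge0 // => j _; rewrite !mxE.
by rewrite mulrAC mulr_ge0 // mul_conjC_ge0.
Qed.

Lemma adj_delta d j : adjmx (delta_mx 0 j : 'rV[C]_d) = delta_mx j 0.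
Proof.
apply/matrixP=> a b; rewrite !mxE !ord1 !eqxx /=.
by case: (a == j); rewrite /= ?conjC1 ?conjC0.
Qed.

Lemma psd_entry d (A : 'M[C]_d) j : psd A -> 0 <= A j j.
Proof.
move=> pA; have := psd_form (delta_mx 0 j) pA.
by rewrite -rowE adj_delta -colE !mxE.
Qed.

Lemma tr_psd_ge0 d (A : 'M[C]_d) : psd A -> 0 <= \tr A.
Proof. by move=> pA; rewrite /mxtrace sumr_ge0 // => j _; apply: psd_entry. Qed.

Lemma unitary_adj d (P : 'M[C]_d) : P \is unitarymx ->
  P *m adjmx P = 1%:M /\ adjmx P *m P = 1%:M.
Proof.
move=> /unitarymxP H; have H1 : P *m adjmx P = 1%:M by exact: H.
split=> //; exact: mulmx1C.
Qed.

Lemma psd_hermsym d (B : 'M[C]_d) : psd B -> B \is hermsymmx.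
Proof.
move=> [hB _]; apply/is_hermitianmxP; rewrite expr0 scale1r.
by rewrite -[LHS]hB.
Qed.

Lemma psd_spectral d (B : 'M[C]_d) : psd B ->
  [/\ spectralmx B *m adjmx (spectralmx B) = 1%:M,
      adjmx (spectralmx B) *m spectralmx B = 1%:M,
      B = adjmx (spectralmx B) *m diag_mx (spectral_diag B) *m spectralmx B &
      forall j, 0 <= spectral_diag B 0 j].
Proof.
move=> pB; have [U1 U2] := unitary_adj (spectral_unitarymx B).
have hB := psd_hermsym pB.
have /orthomx_spectralP EB := hermitian_normalmx hB.
have EB' : B = adjmx (spectralmx B) *m diag_mx (spectral_diag B) *m spectralmx B.
  by rewrite {1}EB invmx_unitary ?spectral_unitarymx.
split=> // j.
have : psd (adjmx (adjmx (spectralmx B)) *m B *m adjmx (spectralmx B)) by apply: psd_conj.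
rewrite adjK {2}EB' !mulmxA U1 mul1mx -mulmxA U1 mulmx1 => /(psd_entry j).
by rewrite mxE eqxx mulr1n.
Qed.

Lemma tr_psdM_ge0 d (A B : 'M[C]_d) : psd A -> psd B -> 0 <= \tr (A *m B).
Proof.
move=> pA pB; have [U1 U2 EB he] := psd_spectral pB.
set P := spectralmx B in U1 U2 EB; set e := spectral_diag B in EB he.
have pA' : psd (adjmx (adjmx P) *m A *m adjmx P) by apply: psd_conj.
rewrite adjK in pA'.
rewrite EB !mulmxA mxtrace_mulC !mulmxA mul_mx_diag /mxtrace sumr_ge0 // => j _.
by rewrite mxE mulr_ge0 // psd_entry.
Qed.

Lemma adj_entry m k (M : 'M[C]_(m, k)) i j : adjmx M j i = conjC (M i j).
Proof. by rewrite !mxE. Qed.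

Lemma psd_ker d (X : 'M[C]_d) (a : 'rV[C]_d) : psd X ->
  (a *m X *m adjmx a) 0 0 = 0 -> a *m X = 0.
Proof.
move=> [hX pX] h0.
suff H : forall b : 'rV_d, (a *m X *m adjmx b) 0 0 = 0.
  by apply/rowP => j; have := H (delta_mx 0 j); rewrite adj_delta -colE !mxE.
move=> b; set c := (a *m X *m adjmx b) 0 0.
have hc : (b *m X *m adjmx a) 0 0 = conjC c.
  by rewrite /c -adj_entry !adjM adjK hX mulmxA.
set beta := (b *m X *m adjmx b) 0 0.
have hb : 0 <= beta := pX b.
apply/eqP; apply/negP => /negP cnz.
pose t := - (beta + 1) / c.
have := pX (t *: a + b).
rewrite adjD adjZ !mulmxDl !mulmxDr -!scalemxAl -!scalemxAr.
have tc : t * c = - (beta + 1) by rewrite /t divfK.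
have hc2 : (a *m X *m adjmx b) 0 0 = c by [].
have hb2 : (b *m X *m adjmx b) 0 0 = beta by [].
clearbody c beta t.
move: (a *m X *m adjmx a) (a *m X *m adjmx b) (b *m X *m adjmx a) (b *m X *m adjmx b) h0 hc hc2 hb2.
move=> M1 M2 M3 M4 h1 h3 h2 h4; rewrite !mxE h1 h2 h3 h4 mulr0 mulr0 add0r.
have tc' : conjC t * conjC c = - (beta + 1).
  rewrite -rmorphM tc rmorphN; congr (- _).
  by apply: geC0_conj; rewrite addr_ge0.
rewrite tc tc'.
have -> : - (beta + 1) + (- (beta + 1) + beta) = - (beta + 1 + 1) by ring.
rewrite oppr_ge0 => H.
have : 0 < beta + 1 + 1 by rewrite addr_gt0 // ltr_wpDl.
by move/lt_geF; rewrite H.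
Qed.
Lemma CS d (a b : 'rV[C]_d) :
  (a *m adjmx b) 0 0 * conjC ((a *m adjmx b) 0 0) <=
  (a *m adjmx a) 0 0 * (b *m adjmx b) 0 0.
Proof.
have := (CauchySchwarz (@dotmx C d) a b).1.
rewrite -!dotmxE -normCK; exact.
Qed.

Lemma mxsub m k (X Y : 'M[C]_(m, k)) i j : (X - Y) i j = X i j - Y i j.
Proof. by rewrite !mxE. Qed.
Lemma mxadd m k (X Y : 'M[C]_(m, k)) i j : (X + Y) i j = X i j + Y i j.
Proof. by rewrite !mxE. Qed.
Lemma mxscale m k (a : C) (X : 'M[C]_(m, k)) i j : (a *: X) i j = a * X i j.
Proof. by rewrite !mxE. Qed.

Lemma psd_spectral_ex d (B : 'M[C]_d) : psd B -> exists (P : 'M[C]_d) (e : 'rV[C]_d),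
  [/\ P *m adjmx P = 1%:M, adjmx P *m P = 1%:M, B = adjmx P *m diag_mx e *m P &
      forall j, 0 <= e 0 j].
Proof. by move=> pB; exists (spectralmx B), (spectral_diag B); apply: psd_spectral. Qed.

Lemma entry_rows m k (M N : 'M[C]_(m, k)) j :
  (row j M *m adjmx (row j N)) 0 0 = (M *m adjmx N) j j.
Proof. by rewrite !mxE; apply: eq_bigr => l _; rewrite !mxE. Qed.

Lemma diag_herm d (r : 'rV[C]_d) : (forall j, 0 <= r 0 j) -> adjmx (diag_mx r) = diag_mx r.
Proof. exact: adj_diag. Qed.

Section Main.
Variables (d : nat) (S : 'M[C]_d).
Hypothesis pS : psd S.

Variables (P0 : 'M[C]_d) (s : 'rV[C]_d).
Hypotheses (U1_ : P0 *m adjmx P0 = 1%:M) (U2_ : adjmx P0 *m P0 = 1%:M)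
  (ES_ : S = adjmx P0 *m diag_mx s *m P0) (hs_ : forall j, 0 <= s 0 j).
Definition sq : 'rV[C]_d := \row_j sqrtC (s 0 j).
Definition hh : 'rV[C]_d := \row_j (sqrtC (s 0 j))^-1.
Definition pp : 'rV[C]_d := \row_j ((s 0 j != 0)%:R : C).
Definition Kmx := diag_mx sq *m P0.
Definition Gmx := diag_mx hh *m P0.
Definition Nmx := adjmx Gmx *m Gmx.

Lemma spS : [/\ P0 *m adjmx P0 = 1%:M, adjmx P0 *m P0 = 1%:M,
      S = adjmx P0 *m diag_mx s *m P0 & forall j, 0 <= s 0 j].
Proof. by split. Qed.

Lemma sq_ge0 j : 0 <= sq 0 j. Proof. by rewrite mxE sqrtC_ge0; case: spS. Qed.
Lemma hh_ge0 j : 0 <= hh 0 j. Proof. by rewrite mxE invr_ge0 sqrtC_ge0; case: spS. Qed.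
Lemma pp_ge0 j : 0 <= pp 0 j. Proof. by rewrite mxE ler0n. Qed.

Lemma sqsq : diag_mx sq *m diag_mx sq = diag_mx s.
Proof.
rewrite mulmx_diag; congr diag_mx; apply/rowP=> j; rewrite !mxE.
by rewrite -expr2 sqrtCK.
Qed.

Lemma sqhh : diag_mx sq *m diag_mx hh = diag_mx pp.
Proof.
rewrite mulmx_diag; congr diag_mx; apply/rowP=> j; rewrite !mxE.
have [->|nz] := eqVneq (s 0 j) 0; first by rewrite sqrtC0 mul0r.
by rewrite divff // sqrtC_eq0.
Qed.

Lemma hhsq : diag_mx hh *m diag_mx sq = diag_mx pp.
Proof.
rewrite mulmx_diag -sqhh mulmx_diag; congr diag_mx; apply/rowP=> j.
by rewrite !mxE mulrC.
Qed.

Lemma hhpp : diag_mx hh *m diag_mx pp = diag_mx hh.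
Proof.
rewrite mulmx_diag; congr diag_mx; apply/rowP=> j; rewrite !mxE.
have [->|nz] := eqVneq (s 0 j) 0; first by rewrite sqrtC0 invr0 mul0r.
by rewrite mulr1.
Qed.

Lemma pppp : diag_mx pp *m diag_mx pp = diag_mx pp.
Proof.
rewrite mulmx_diag; congr diag_mx; apply/rowP=> j; rewrite !mxE.
by case: (s 0 j != 0); rewrite ?mulr1 ?mulr0.
Qed.

Lemma adjK_ : adjmx Kmx = adjmx P0 *m diag_mx sq.
Proof. by rewrite /Kmx adjM diag_herm //; exact: sq_ge0. Qed.

Lemma adjG_ : adjmx Gmx = adjmx P0 *m diag_mx hh.
Proof. by rewrite /Gmx adjM diag_herm //; exact: hh_ge0. Qed.

Lemma S_KK : S = adjmx Kmx *m Kmx.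
Proof.
case: spS => _ _ ES _.
by rewrite adjK_ /Kmx mulmxA -[_ *m diag_mx sq *m diag_mx sq]mulmxA sqsq.
Qed.

Lemma P0SP0 : P0 *m S *m adjmx P0 = diag_mx s.
Proof.
case: spS => U1 U2 ES _.
have -> : P0 *m S *m adjmx P0 = P0 *m (adjmx P0 *m diag_mx s *m P0) *m adjmx P0 by rewrite -ES.
by rewrite !mulmxA U1 mul1mx -mulmxA U1 mulmx1.
Qed.

Lemma P0S : P0 *m S = diag_mx s *m P0.
Proof.
case: spS => U1 U2 _ _.
by rewrite -P0SP0 -[_ *m adjmx P0 *m P0]mulmxA U2 mulmx1.
Qed.

Lemma row_P0_norm j : (row j P0 *m adjmx (row j P0)) 0 0 = 1.
Proof. by case: spS => U1 _ _ _; rewrite entry_rows U1 mxE eqxx. Qed.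

Lemma row_P0_eig j : row j P0 *m S = s 0 j *: row j P0.
Proof. by rewrite -row_mul P0S row_mul row_diag_mx -scalemxAl -rowE. Qed.

Lemma s_eig j : eigenvalue S (s 0 j).
Proof.
apply/eigenvalueP; exists (row j P0); first exact: row_P0_eig.
apply/eqP => h0; have := row_P0_norm j; rewrite h0 mul0mx mxE => /eqP.
by rewrite eq_sym oner_eq0.
Qed.

Lemma N_bound (lam : C) : 0 < lam -> (forall j, s 0 j != 0 -> lam <= s 0 j) ->
  forall u : 'rV_d, (u *m Nmx *m adjmx u) 0 0 <= lam^-1 * (u *m adjmx u) 0 0.
Proof.
move=> lam0 hl u.
pose r : 'rV[C]_d := \row_j (lam^-1 - hh 0 j * hh 0 j).
have r0 j : 0 <= r 0 j.
  rewrite !mxE -invfM -expr2 sqrtCK subr_ge0.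
  have [->|nz] := eqVneq (s 0 j) 0; first by rewrite invr0 invr_ge0 ltW.
  have sp : 0 < s 0 j by apply: lt_le_trans lam0 (hl _ nz).
  by rewrite lef_pV2 ?posrE // hl.
have pr : psd (adjmx P0 *m diag_mx r *m P0).
  exact: psd_conj P0 (psd_diag r0).
have Er : diag_mx r = lam^-1 *: 1%:M - diag_mx hh *m diag_mx hh.
  rewrite mulmx_diag; apply/matrixP=> a b; rewrite !mxE.
  by case: (a == b); rewrite ?mulr1n ?mulr0n ?mulr1 ?mulr0 ?subrr.
case: spS => U1 U2 _ _.
have EN : adjmx P0 *m diag_mx r *m P0 = lam^-1 *: 1%:M - Nmx.
  rewrite Er mulmxBr mulmxBl -scalemxAr mulmx1 -scalemxAl U2.
  by rewrite /Nmx adjG_ /Gmx !mulmxA.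
have := psd_form u pr; rewrite EN mulmxBr mulmxBl -scalemxAr mulmx1 -scalemxAl.
by move: (u *m adjmx u) (u *m Nmx *m adjmx u) => X Y; rewrite !mxE subr_ge0.
Qed.

Section PerA.
Variable A : 'M[C]_d.
Hypotheses (pA : psd A) (pSA : psd (S - A)).

Lemma supp : diag_mx pp *m P0 *m A = P0 *m A.
Proof.
apply/row_matrixP => j.
rewrite !row_mul row_diag_mx -!scalemxAl -rowE mxE.
case: eqP => [sj0|_]; last by rewrite scale1r.
rewrite scale0r; apply/esym/(psd_ker pA).
set r := row j P0.
have h1 : (r *m S *m adjmx r) 0 0 = 0.
  by rewrite /r -row_mul entry_rows P0SP0 mxE eqxx mulr1n sj0.
have h2 := psd_form r pSA.
rewrite mulmxBr mulmxBl mxsub h1 sub0r oppr_ge0 in h2.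
by apply/le_anti; rewrite h2 psd_form.
Qed.

Lemma supp' : A *m (adjmx P0 *m diag_mx pp) = A *m adjmx P0.
Proof.
have := congr1 (@adjmx R _ _) supp.
rewrite !adjM (psd_herm pA) diag_herm; last exact: pp_ge0.
by rewrite mulmxA.
Qed.

Definition Bmx := Gmx *m A *m adjmx Gmx.

Lemma A_KBK : A = adjmx Kmx *m Bmx *m Kmx.
Proof.
have E1 : adjmx Kmx *m Bmx *m Kmx = adjmx P0 *m ((diag_mx sq *m diag_mx hh) *m
    (P0 *m A *m adjmx P0) *m (diag_mx hh *m diag_mx sq)) *m P0.
  by rewrite /Bmx adjK_ adjG_ /Kmx /Gmx !mulmxA.
have E2 : diag_mx pp *m (P0 *m A *m adjmx P0) = P0 *m A *m adjmx P0.
  by rewrite !mulmxA supp.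
have E3 : (P0 *m A *m adjmx P0) *m diag_mx pp = P0 *m A *m adjmx P0.
  by rewrite -!mulmxA supp'.
case: spS => U1 U2 _ _.
by rewrite E1 sqhh hhsq E2 E3 !mulmxA U2 mul1mx -mulmxA U2 mulmx1.
Qed.

Lemma psdB : psd Bmx.
Proof. by have := psd_conj (adjmx Gmx) pA; rewrite adjK. Qed.

Lemma B_pp : Bmx *m diag_mx pp = Bmx.
Proof. by rewrite /Bmx -mulmxA adjG_ -[adjmx P0 *m _ *m _]mulmxA hhpp. Qed.

Hypothesis trA : \tr A != 0.

Lemma GK : Gmx *m adjmx Kmx = diag_mx pp.
Proof.
case: spS => U1 _ _ _.
by rewrite adjK_ /Gmx -mulmxA [P0 *m _]mulmxA U1 mul1mx hhsq.
Qed.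

Lemma KG : Kmx *m adjmx Gmx = diag_mx pp.
Proof.
case: spS => U1 _ _ _.
by rewrite adjG_ /Kmx -mulmxA [P0 *m _]mulmxA U1 mul1mx sqhh.
Qed.

Lemma mainA : exists mu : R, exists v : 'rV[C]_d,
  [/\ 0 < mu, psd (mu%:C *: S - A), (v *m S *m adjmx v) 0 0 = 1,
      (v *m A *m adjmx v) 0 0 = mu%:C &
      forall u : 'rV_d, (u *m adjmx v) 0 0 * conjC ((u *m adjmx v) 0 0) <=
                        (u *m Nmx *m adjmx u) 0 0].
Proof.
have [Q [e [Q1 Q2 EB he]]] := psd_spectral_ex psdB.
have [j0 _ | H0] := pickP (@predT 'I_d); last first.
  by move/negP: trA; case; rewrite /mxtrace big1 // => i _; move: (H0 i).
have [k _ Hk] := @arg_maxP _ R 'I_d j0 xpredT (fun j => complex.Re (e 0 j)) isT.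
set mu := complex.Re (e 0 k).
have ereal j : e 0 j = (complex.Re (e 0 j))%:C := esym (RRe_real (ger0_real (he j))).
have ele j : e 0 j <= mu%:C by rewrite ereal lecR; apply: Hk.
have QB : Q *m Bmx = diag_mx e *m Q by rewrite EB !mulmxA Q1 mul1mx.
set w := row k Q.
have wB : w *m Bmx = e 0 k *: w by rewrite -row_mul QB row_mul row_diag_mx -scalemxAl -rowE.
have ww : (w *m adjmx w) 0 0 = 1 by rewrite entry_rows Q1 mxE eqxx.
have pmu : psd (mu%:C *: 1%:M - Bmx).
  have pd : psd (adjmx Q *m diag_mx (\row_j (mu%:C - e 0 j)) *m Q).
    by apply: psd_conj; apply: psd_diag => j; rewrite mxE subr_ge0.
  suff <- : adjmx Q *m diag_mx (\row_j (mu%:C - e 0 j)) *m Q = mu%:C *: 1%:M - Bmx by [].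
  have -> : diag_mx (\row_j (mu%:C - e 0 j)) = mu%:C *: 1%:M - diag_mx e.
    apply/matrixP => a b; rewrite !mxE.
    by case: (a == b); rewrite ?mulr1n ?mulr0n ?mulr1 ?mulr0 ?subrr.
  by rewrite mulmxBr mulmxBl -scalemxAr mulmx1 -scalemxAl Q2 -EB.
have mu_ge0 : 0 <= mu by have := he k; rewrite (ereal k) ler0c.
have mu0 : 0 < mu.
  rewrite lt_neqAle mu_ge0 andbT; apply/negP => /eqP mu0.
  have e0 : e = 0.
    apply/rowP => j; rewrite mxE; apply/le_anti; rewrite he andbT.
    by have := ele j; rewrite -mu0.
  move/negP: trA; apply; apply/eqP.
  rewrite A_KBK EB e0 raddf0 mulmx0 mul0mx mulmx0 mul0mx.
  exact: mxtrace0.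
have pSmu : psd (mu%:C *: S - A).
  have -> : mu%:C *: S - A = adjmx Kmx *m (mu%:C *: 1%:M - Bmx) *m Kmx.
    by rewrite mulmxBr mulmxBl -scalemxAr mulmx1 -scalemxAl -S_KK -A_KBK.
  exact: psd_conj.
have ek0 : e 0 k != 0.
  by rewrite (ereal k) -/mu; apply: lt0r_neq0; rewrite ltcR.
have wpp : w *m diag_mx pp = w.
  apply: (scalerI ek0).
  by rewrite scalemxAl -wB -mulmxA B_pp wB.
exists mu, (w *m Gmx); split => //.
- have -> : w *m Gmx *m S *m adjmx (w *m Gmx) =
      w *m (Gmx *m adjmx Kmx) *m (Kmx *m adjmx Gmx) *m adjmx w.
    by rewrite S_KK /Gmx /Kmx !adjM !mulmxA.
  rewrite GK KG -[w *m _ *m _]mulmxA pppp wpp; exact: ww.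
- have -> : w *m Gmx *m A *m adjmx (w *m Gmx) = w *m Bmx *m adjmx w.
    by rewrite /Bmx adjM !mulmxA.
  by rewrite wB -scalemxAl mxscale ww mulr1 (ereal k).
- move=> u.
  have -> : u *m adjmx (w *m Gmx) = (u *m adjmx Gmx) *m adjmx w by rewrite adjM mulmxA.
  have := CS (u *m adjmx Gmx) w.
  by rewrite ww mulr1 adjM adjK /Nmx !mulmxA.
Qed.

End PerA.

End Main.

Lemma ReMr (a : R) (z : C) : complex.Re (a%:C * z) = a * complex.Re z.
Proof. by case: z => x y /=; rewrite mul0r subr0. Qed.

Lemma rank1_entry d (u v : 'rV[C]_d) :
  (u *m (adjmx v *m v) *m adjmx u) 0 0 =
  (u *m adjmx v) 0 0 * conjC ((u *m adjmx v) 0 0).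
Proof.
have -> : u *m (adjmx v *m v) *m adjmx u = (u *m adjmx v) *m adjmx (u *m adjmx v).
  by rewrite adjM adjK !mulmxA.
by rewrite mxE big_ord1 !mxE.
Qed.

Lemma tr_rank1 d (X : 'M[C]_d) (v : 'rV[C]_d) :
  \tr (X *m (adjmx v *m v)) = (v *m X *m adjmx v) 0 0.
Proof. by rewrite mulmxA mxtrace_mulC trace_mx11 mulmxA. Qed.

Lemma divC (a b : R) : (a / b)%:C = a%:C / b%:C :> C.
Proof. by rewrite rmorphM fmorphV. Qed.

End Helpers.


Unset Implicit Arguments.

Theorem theorem1 (R : realType) (d n : nat) (eta : 'I_n -> R)
  (rho : 'I_n -> 'M[R[i]]_d) (lam : R) :
  ensemble eta rho ->
  smallest_nonzero_eigenvalue (rho0 eta rho) lam ->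
  lam / n%:R <= pG eta rho.
Proof.
move=> [heta [hsum hrho]] [eigl lnz lmin].
set S := rho0 eta rho.
have pr i : psd (rho i) by case: (hrho i).
have trr i : \tr (rho i) = 1 by case: (hrho i).
pose A i := (eta i)%:C *: rho i.
have pA i : psd (A i) by apply: psdZ; [exact: ltW | exact: pr].
have pS : psd S by apply: psd_sum => i _; exact: pA.
have trA i : \tr (A i) = (eta i)%:C by rewrite mxtraceZ trr mulr1.
have trS : \tr S = 1.
  rewrite /S /rho0 raddf_sum /=.
  under eq_bigr => i _ do rewrite mxtraceZ trr mulr1.
  by rewrite -rmorph_sum hsum.
have pSA x : psd (S - A x).
  rewrite /S /rho0 (bigD1 x) //= addrAC subrr add0r.
  by apply: psd_sum => i _; exact: pA.
have trA0 x : \tr (A x) != 0 by rewrite trA; apply: lt0r_neq0; rewrite ltcR.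
have n0 : (0 < n)%N.
  have [i0 _|H0] := pickP (@predT 'I_n); first exact: leq_ltn_trans (ltn_ord i0).
  move: hsum; rewrite big1 => [/eqP|i _]; first by rewrite eq_sym oner_eq0.
  by move: (H0 i).
have [P0 [s [U1 U2 ES hs]]] := psd_spectral_ex pS.
have lam0 : 0 < lam.
  move/eigenvalueP: eigl => [u uS unz].
  have := psd_form u pS; rewrite uS -scalemxAl mxscale.
  have upos : 0 < (u *m adjmx u) 0 0.
    by have := @dotmx_is_dotmx _ d u unz; rewrite dotmxE.
  rewrite pmulr_lge0 // ler0c => l0.
  by rewrite lt_neqAle eq_sym lnz l0.
have hl j : s 0 j != 0 -> lam%:C <= s 0 j.
  by move=> nz; exact: (lmin _ (s_eig U1 U2 ES hs j) nz).
have H x : exists p : R * 'rV[R[i]]_d,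
  [/\ 0 < p.1, psd (p.1%:C *: S - A x), (p.2 *m S *m adjmx p.2) 0 0 = 1,
      (p.2 *m A x *m adjmx p.2) 0 0 = p.1%:C &
      forall u : 'rV_d, (u *m adjmx p.2) 0 0 * conjC ((u *m adjmx p.2) 0 0) <=
                        (u *m Nmx P0 s *m adjmx u) 0 0].
  by have [mu [v Hv]] := mainA U1 U2 ES hs (pA x) (pSA x) (trA0 x); exists (mu, v).
have [f Hf] := fin_all_exists H.
pose mu x := (f x).1; pose v x := (f x).2.
have mu0 x : 0 < mu x by case: (Hf x).
have pmu x : psd ((mu x)%:C *: S - A x) by case: (Hf x).
have vSv x : (v x *m S *m adjmx (v x)) 0 0 = 1 by case: (Hf x).
have vAv x : (v x *m A x *m adjmx (v x)) 0 0 = (mu x)%:C by case: (Hf x).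
have vN x (u : 'rV[R[i]]_d) : (u *m adjmx (v x)) 0 0 * conjC ((u *m adjmx (v x)) 0 0) <=
    (u *m Nmx P0 s *m adjmx u) 0 0.
  by case: (Hf x) => _ _ _ _ h; exact: h u.
clear H Hf.
pose c := lam / n%:R.
have c0 : 0 < c by rewrite divr_gt0 // ltr0n.
pose M x := c%:C *: (adjmx (v x) *m v x).
pose Mq := 1%:M - \sum_x M x.
have pM x : psd (M x) by apply: psdZ (ltW c0) (psd_rank1 _).
have hM x (u : 'rV[R[i]]_d) : (u *m M x *m adjmx u) 0 0 <= c%:C * ((lam%:C)^-1 * (u *m adjmx u) 0 0).
  rewrite /M -scalemxAr -scalemxAl mxscale rank1_entry.
  apply: ler_wpM2l; first by rewrite ler0c ltW.
  apply: le_trans (vN x u) _.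
  by apply: (N_bound U1 U2 ES hs); rewrite ?ltcR.
have lamC0 : lam%:C != 0 :> R[i] by rewrite (lt0r_neq0 (_ : 0 < lam%:C)) // ltcR.
have nC0 : n%:R != 0 :> R[i] by rewrite pnatr_eq0 -lt0n.
have pMq : psd Mq.
  split.
    rewrite /Mq adjB adj1 adj_sum; congr (_ - _); apply: eq_bigr => x _.
    exact: psd_herm (pM x).
  move=> u; rewrite /Mq mulmxBr mulmxBl mulmx1 mxsub subr_ge0 mulmx_sumr mulmx_suml summxE.
  apply: le_trans (ler_sum _ (fun x _ => hM x u)) _.
  rewrite sumr_const card_ord -mulr_natr /c divC rmorph_nat.
  set X := (u *m adjmx u) 0 0.
  have E : lam%:C / n%:R * ((lam%:C)^-1 * X) * n%:R = X.
    by rewrite mulrA (mulrAC lam%:C) mulfV // mul1r mulrAC mulVf // mul1r.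
  by rewrite E.
have meas : measurement Mq M by split => //; split => //; rewrite /Mq subrK.
have ReM (a : R) (z : R[i]) : complex.Re (a%:C * z) = a * complex.Re z.
  by case: z => ? ? /=; rewrite mul0r subr0.
have trSM x : \tr (S *m M x) = c%:C.
  by rewrite /M -scalemxAr mxtraceZ tr_rank1 vSv mulr1.
have vAv' x : (v x *m ((eta x)%:C *: rho x) *m adjmx (v x)) 0 0 = (mu x)%:C := vAv x.
have key x : eta x * trR (rho x) (M x) = c * mu x.
  rewrite /trR /M -scalemxAr mxtraceZ tr_rank1 ReM mulrCA -ReM.
  by rewrite -mxscale scalemxAl scalemxAr vAv'.
have trSMR x : trR S (M x) = c by rewrite /trR trSM.
have mu_ge x : eta x <= mu x.
  have := tr_psd_ge0 (pmu x).
  by rewrite raddfB /= mxtraceZ trS mulr1 trA subr_ge0 lecR.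
have conf_eq x : conf eta rho x = mu x.
  rewrite /conf; set E := (X in sup X).
  have Emu : E (mu x).
    exists Mq, M; split => //; first by rewrite trSMR.
    by rewrite trSMR key [c * _]mulrC mulfK // gt_eqF.
  have ub : ubound E (mu x).
    move=> r [Mq' [M' [hmeas hpos ->]]].
    have pM' : psd (M' x) by case: hmeas => _ [h _]; exact: h x.
    have := tr_psdM_ge0 (pmu x) pM'.
    rewrite mulmxBl -!scalemxAl raddfB /= !mxtraceZ subr_ge0 lecE => /andP [_ hle].
    rewrite !ReM in hle.
    by rewrite ler_pdivrMr.
  apply/le_anti/andP; split; first by apply: ge_sup => //; exists (mu x).
  apply: sup_upper_bound => //; split; first by exists (mu x).
  by exists (mu x).
have mc : maxconf_meas eta rho Mq M.
  split => // x; split; first exact: pM x.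
  rewrite conf_eq /M -scalemxAr mxtraceZ tr_rank1 mulmxBr mulmxBl mxsub.
  rewrite -scalemxAr -scalemxAl mxscale vSv mulr1 vAv' subrr mulr0.
  by [].
pose p := \sum_i eta i * trR (rho i) (M i).
have Pp : (fun q => exists (Mq0 : 'M[R[i]]_d) (M0 : 'I_n -> 'M[R[i]]_d),
    maxconf_meas eta rho Mq0 M0 /\ q = \sum_i eta i * trR (rho i) (M0 i)) p.
  by exists Mq, M.
have ubP : ubound (fun q => exists (Mq0 : 'M[R[i]]_d) (M0 : 'I_n -> 'M[R[i]]_d),
    maxconf_meas eta rho Mq0 M0 /\ q = \sum_i eta i * trR (rho i) (M0 i)) 1.
  move=> q [Mq' [M' [[[pMq' [pM' hs']] _] ->]]].
  rewrite -hsum; apply: ler_sum => i _.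
  rewrite -[X in _ <= X]mulr1; apply: ler_wpM2l; first exact: ltW.
  have E1 : 1%:M - M' i = Mq' + \sum_(j | j != i) M' j.
    by rewrite -hs' (bigD1 i) //= addrCA [M' i + _]addrC addrK.
  have pR : psd (1%:M - M' i).
    by rewrite E1; apply: psdD => //; apply: psd_sum.
  have := tr_psdM_ge0 (pr i) pR.
  rewrite mulmxBr mulmx1 raddfB /= trr subr_ge0 lecE => /andP [_].
  by rewrite /trR.
have pge : lam / n%:R <= p.
  rewrite /p (eq_bigr _ (fun i _ => key i)) -mulr_sumr -/c.
  rewrite -[X in X <= _]mulr1 -hsum; apply: ler_wpM2l; first exact: ltW.
  by apply: ler_sum => i _; exact: mu_ge.
apply: le_trans pge _.
apply: sup_upper_bound => //; split; first by exists p.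
by exists 1.
Qed.
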